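(* Let $k\ge 2$ be a constant integer. There is a constant $C>0$ such that for all integers $1\le j\le n$ and all positive integers $q$ the following holds: letting $x$ be the vertex born in round $j$ of the random $k$-tree process, conditional on any realization of $G(j)$, the probability that $x$ has degree greater than $k+q(n/j)^{(k-1)/k}$ in $G(n)$ is at most $C\,q\sqrt{q}\,e^{-q}$.
   Context: Random $k$-tree process: $G(0)$ is a clique on $k$ vertices; for $t\ge1$, $G(t)$ is obtained from $G(t-1)$ by choosing a $k$-clique of $G(t-1)$ uniformly at random, creating a new vertex (said to be born in round $t$), and joining it to all vertices of the chosen clique. *)

(* Defs.v *)
From mathcomp Require Import all_boot.
From Stdlib Require Import Reals.

Set Implicit Arguments.
Unset Strict Implicit.
Unset Printing Implicit Defensive.

(* A graph on vertex set {0,...,nv-1}: (nv, list of edges). *)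
Definition graph := (nat * seq (nat * nat))%type.

Definition adj (g : graph) (u v : nat) : bool :=
  ((u, v) \in g.2) || ((v, u) \in g.2).

Fixpoint ksubsets (k : nat) (s : seq nat) : seq (seq nat) :=
  match k, s with
  | 0, _ => [:: [::]]
  | S _, [::] => [::]
  | S k', x :: s' => map (cons x) (ksubsets k' s') ++ ksubsets k s'
  end.

Fixpoint pairwise_adj (g : graph) (s : seq nat) : bool :=
  match s with
  | [::] => true
  | x :: s' => all (adj g x) s' && pairwise_adj g s'
  end.

(* the k-cliques of g (each listed once, as an increasing list of vertices) *)
Definition kcliques (k : nat) (g : graph) : seq (seq nat) :=
  [seq c <- ksubsets k (iota 0 g.1) | pairwise_adj g c].

Definition G0 (k : nat) : graph :=
  (k, [seq (u, v) | u <- iota 0 k, v <- iota u.+1 (k - u.+1)]).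

Definition step (g : graph) (c : seq nat) : graph :=
  (g.1.+1, g.2 ++ [seq (v, g.1) | v <- c]).

Definition sumR (s : seq R) : R := foldr Rplus 0%R s.

(* Probability, for the random k-tree process, that the trajectory
   [G(0); ...; G(n)] satisfies E, starting from history h (h = [G(0);...;G(t)])
   and running m more rounds; each round picks a k-clique of the current graph
   uniformly at random. *)
Fixpoint prT (k m : nat) (h : seq graph) (E : seq graph -> bool) : R :=
  match m with
  | 0 => if E h then 1%R else 0%R
  | S m' =>
      let g := last (G0 k) h in
      let cs := kcliques k g in
      (sumR [seq prT k m' (rcons h (step g c)) E | c <- cs] / INR (size cs))%R
  end.

Definition probK (k n : nat) (E : seq graph -> bool) : R := prT k n [:: G0 k] E.

Definition Gat (k : nat) (h : seq graph) (t : nat) : graph := nth (G0 k) h t.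

Definition sameG (g H : graph) : bool :=
  (g.1 == H.1) && all (fun e => adj H e.1 e.2) g.2 && all (fun e => adj g e.1 e.2) H.2.

Definition degree (g : graph) (x : nat) : nat := count (adj g x) (iota 0 g.1).

(* vertex born in round j >= 1 (initial vertices are 0..k-1) *)
Definition born (k j : nat) : nat := (k + j - 1)%N.

(* Main.v *)
Require Import Defs.
From mathcomp Require Import all_boot.
From Stdlib Require Import Reals.
From Stdlib Require Import Lra Lia.
From mathcomp Require Import zify.
From Coquelicot Require Coquelicot.

Lemma pairwise_adjE g s : pairwise_adj g s = pairwise (adj g) s.
Proof. by elim: s => //= x s ->. Qed.

Lemma ksub_sub k l s : s \in ksubsets k l -> subseq s l /\ size s = k.
Proof.
elim: l k s => [|x l IH] [|k] s.
- by rewrite inE => /eqP ->.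
- by [].
- by rewrite inE => /eqP ->; rewrite sub0seq.
- rewrite [ksubsets _ _]/= mem_cat => /orP [/mapP [s' Hs' ->] | Hs].
  + have [H1 H2] := IH _ _ Hs'. by rewrite /= eqxx H1 H2.
  + have [H1 H2] := IH _ _ Hs. split=> //.
    apply: subseq_trans H1 _. exact: subseq_cons.
Qed.

Lemma sub_ksub k l s : subseq s l -> size s = k -> s \in ksubsets k l.
Proof.
elim: l k s => [|x l IH] [|k] s.
- by rewrite subseq0 => /eqP -> _; rewrite inE.
- by rewrite subseq0 => /eqP ->.
- by case: s => // _ _; rewrite inE.
- case: s => [//|y s] Hsub [Hsz].
  rewrite [ksubsets _ _]/= mem_cat. move: Hsub; rewrite /=. case: eqP => [-> Hsub | _ Hsub].
  + apply/orP; left. apply: map_f. exact: IH.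
  + apply/orP; right. apply: IH => //. by rewrite /= Hsz.
Qed.

Lemma ksubsetsP k l s : (s \in ksubsets k l) = subseq s l && (size s == k).
Proof.
apply/idP/andP => [/ksub_sub [-> ->] // | [H /eqP E]]. exact: sub_ksub.
Qed.

Lemma ksubsets_uniq k l : uniq l -> uniq (ksubsets k l).
Proof.
elim: l k => [|x l IH] [|k] //= /andP [xl ul].
have inj : injective (cons x) by move=> a b [].
rewrite cat_uniq (map_inj_uniq inj) !IH //= andbT.
apply/hasPn => s Hs. apply/mapP => [[s' _ Es]].
have [H1 _] := ksub_sub _ _ _ Hs. move: H1; rewrite Es => /mem_subseq /(_ x).
rewrite inE eqxx => /(_ isT). by rewrite (negPf xl).
Qed.

Lemma kcliquesP k g s :
  (s \in kcliques k g) = [&& subseq s (iota 0 g.1), size s == k & pairwise (adj g) s].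
Proof. by rewrite /kcliques mem_filter ksubsetsP pairwise_adjE andbC andbA. Qed.

Lemma kcliques_uniq k g : uniq (kcliques k g).
Proof. apply: filter_uniq. apply: ksubsets_uniq. exact: iota_uniq. Qed.

Definition rng (g : graph) := all (fun e => (e.1 < g.1) && (e.2 < g.1)) g.2.

Lemma mem_new (c : seq nat) (n u v : nat) :
  ((u, v) \in [seq (w, n) | w <- c]) = (u \in c) && (v == n).
Proof.
apply/mapP/andP => [[w Hw [-> ->]] | [Hu /eqP ->]]; first by rewrite eqxx.
by exists u.
Qed.

Lemma adj_step g c u v :
  adj (step g c) u v = [|| adj g u v, (u \in c) && (v == g.1) | (v \in c) && (u == g.1)].
Proof.
rewrite /adj /step /= !mem_cat !mem_new.
by case: ((u,v) \in g.2); case: ((v,u) \in g.2); case: (u \in c); case: (v \in c);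
   case: (v == g.1); case: (u == g.1).
Qed.

Lemma adj_rng g u v : rng g -> adj g u v -> (u < g.1) && (v < g.1).
Proof.
move=> /allP R /orP [H|H]; have /andP [H1 H2] := R _ H; by rewrite H1 H2.
Qed.

Lemma iotaSr n : iota 0 n.+1 = rcons (iota 0 n) n.
Proof. by rewrite -addn1 iotaD cats1. Qed.

Lemma count_split {T : Type} (a b : pred T) (s : seq T) :
  count a s = count (fun x => a x && b x) s + count (fun x => a x && ~~ b x) s.
Proof.
elim: s => //= x s ->. case: (a x); case: (b x) => /=; lia.
Qed.

Lemma pairwise_mem2 {T : eqType} (r : rel T) (s : seq T) x y :
  pairwise r s -> x \in s -> y \in s -> x != y -> r x y || r y x.
Proof.
elim: s => //= z s IH /andP [Hz Hs].
rewrite !inE => /orP [/eqP ->|Hx] /orP [/eqP ->|Hy] Hxy.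
- by rewrite eqxx in Hxy.
- by rewrite (allP Hz y Hy).
- by rewrite (allP Hz x Hx) orbT.
- exact: IH.
Qed.

Lemma adjC g u v : adj g u v = adj g v u.
Proof. by rewrite /adj orbC. Qed.

Section Step.
Variables (k : nat) (g : graph) (c : seq nat).
Hypothesis Hr : rng g.
Hypothesis Hc : c \in kcliques k g.
Local Notation n := g.1.
Local Notation g' := (step g c).

Lemma c_sub : subseq c (iota 0 n).
Proof. by move: Hc; rewrite kcliquesP => /and3P []. Qed.
Lemma c_size : size c = k.
Proof. by move: Hc; rewrite kcliquesP => /and3P [_ /eqP]. Qed.
Lemma c_pw : pairwise (adj g) c.
Proof. by move: Hc; rewrite kcliquesP => /and3P []. Qed.
Lemma c_uniq : uniq c.
Proof. exact: (subseq_uniq c_sub (iota_uniq _ _)). Qed.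
Lemma c_lt : all (fun v => v < n) c.
Proof. by apply/allP => v /(mem_subseq c_sub); rewrite mem_iota. Qed.
Lemma c_sorted : sorted ltn c.
Proof. exact: (subseq_sorted ltn_trans c_sub (iota_ltn_sorted _ _)). Qed.
Lemma n_notin_c : n \notin c.
Proof. apply/negP => /(allP c_lt); by rewrite ltnn. Qed.

Lemma rng_step : rng g'.
Proof.
rewrite /rng /= all_cat. apply/andP; split.
- apply/allP => e He. have /andP [H1 H2] := allP Hr e He.
  by rewrite !ltnS (ltnW H1) (ltnW H2).
- apply/allP => e /mapP [v Hv ->] /=. by rewrite ltnSn andbT ltnS ltnW // (allP c_lt).
Qed.

Lemma adj_g_n u : adj g u n = false.
Proof. apply/negP => /(adj_rng _ _ _ Hr) /andP [_]. by rewrite ltnn. Qed.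

Lemma deg_step x : x < n -> degree g' x = degree g x + (x \in c).
Proof.
move=> hx. rewrite /degree [X in iota 0 X]/= iotaSr -cats1 count_cat /= addn0.
congr (_ + _).
- apply: eq_in_count => u; rewrite mem_iota add0n => /andP [_ hu] /=.
  by rewrite adj_step (ltn_eqF hu) (ltn_eqF hx) !andbF !orbF.
- rewrite adj_step adj_g_n eqxx (ltn_eqF hx) andbT andbF orbF /=. by case: (x \in c).
Qed.

Lemma count_mem_iota : count (mem c) (iota 0 n) = size c.
Proof.
rewrite -size_filter. apply: perm_size. apply: uniq_perm.
- apply: filter_uniq. exact: iota_uniq.
- exact: c_uniq.
- move=> u. rewrite mem_filter mem_iota /= add0n. apply/andP/idP => [[]//|H].
  by rewrite H (allP c_lt).
Qed.

Lemma deg_new : degree g' n = size c.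
Proof.
rewrite /degree [X in iota 0 X]/= iotaSr -cats1 count_cat /= addn0.
rewrite adj_step adj_g_n eqxx (negPf n_notin_c) /= addn0 -count_mem_iota.
apply: eq_in_count => u; rewrite mem_iota add0n => /andP [_ hu] /=.
rewrite adj_step adjC adj_g_n (ltn_eqF hu) (negPf n_notin_c) eqxx /=. by rewrite andbT.
Qed.

Lemma kc_old s : s \in kcliques k g -> s \in kcliques k g'.
Proof.
rewrite !kcliquesP => /and3P [H1 H2 H3]. rewrite H2 andTb [X in iota 0 X]/= iotaSr.
rewrite (subseq_trans H1 (subseq_rcons _ _)) /=.
apply: sub_pairwise H3 => u v H. by rewrite adj_step H.
Qed.

Definition sv (v : nat) := rcons (filter (predC1 v) c) n.

Lemma size_filter_pred1 v : v \in c -> size (filter (predC1 v) c) = k.-1.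
Proof.
move=> hv. rewrite size_filter -c_size.
have := count_predC (pred1 v) c. have := count_uniq_mem v c_uniq. rewrite hv.
rewrite (@eq_count _ (predC (pred1 v)) (predC1 v)) // => -> /=. lia.
Qed.

Lemma kc_new v : v \in c -> 0 < k -> sv v \in kcliques k g'.
Proof.
move=> hv hk. rewrite kcliquesP [X in iota 0 X]/= iotaSr /sv -!cats1 subseq_cat2r.
rewrite (subseq_trans (filter_subseq _ _) c_sub) size_cat size_filter_pred1 //= addn1.
rewrite prednK // eqxx /= cats1 pairwise_rcons. apply/andP; split.
- apply/allP => u; rewrite mem_filter => /andP [_ hu]. by rewrite adj_step hu eqxx orbT.
- apply: pairwise_filter. apply: sub_pairwise c_pw => a b H. by rewrite adj_step H.
Qed.

Lemma kc_back s : s \in kcliques k g' -> n \notin s -> s \in kcliques k g.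
Proof.
rewrite !kcliquesP => /and3P [H1 H2 H3] Hn. rewrite H2 /=.
have Hall : all (fun u => u < n) s.
{ apply/allP => u Hu. have := mem_subseq H1 Hu. rewrite mem_iota /= add0n ltnS leq_eqVlt.
  case/orP => // /eqP E. by rewrite -E Hu in Hn. }
apply/andP; split.
- have : subseq s (filter (fun u => u < n) (iota 0 n.+1)) by rewrite subseq_filter Hall.
  rewrite iotaSr filter_rcons ltnn. have Hi : all (fun u => u < n) (iota 0 n) by apply/allP => u; rewrite mem_iota.
  by move/all_filterP: Hi => ->.
- apply: (sub_in_pairwise _ Hall H3) => u v hu hv.
  rewrite adj_step (ltn_eqF hu) (ltn_eqF hv) !andbF !orbF. done.
Qed.

Lemma sv_mem v u : (u \in sv v) = (u == n) || ((u != v) && (u \in c)).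
Proof. by rewrite /sv mem_rcons inE mem_filter. Qed.

Lemma sv_sorted v : sorted ltn (sv v).
Proof.
rewrite (sorted_pairwise ltn_trans) /sv pairwise_rcons. apply/andP; split.
- apply/allP => u; rewrite mem_filter => /andP [_ hu]. exact: (allP c_lt).
- apply: pairwise_filter. by rewrite -(sorted_pairwise ltn_trans) c_sorted.
Qed.

Lemma kc_newform s : 0 < k -> s \in kcliques k g' -> n \in s -> exists2 v, v \in c & s = sv v.
Proof.
move=> hk. rewrite kcliquesP => /and3P [H1 /eqP H2 H3] Hn.
have Ss : sorted ltn s.
{ apply: (subseq_sorted ltn_trans H1). exact: iota_ltn_sorted. }
have Us : uniq s by apply: (subseq_uniq H1); exact: iota_uniq.
set s' := filter (predC1 n) s.
have Us' : uniq s' by apply: filter_uniq.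
have Sub : {subset s' <= c}.
{ move=> u; rewrite mem_filter => /andP [hun hu].
  have := pairwise_mem2 _ _ _ _ H3 hu Hn hun. rewrite adjC orbb adj_step (adjC g n u) adj_g_n.
  by rewrite eqxx andbT (negPf n_notin_c) /=. }
have Sz : size s' = k.-1.
{ rewrite size_filter -H2.
  have := count_predC (pred1 n) s. have := count_uniq_mem n Us. rewrite Hn.
  rewrite (@eq_count _ (predC (pred1 n)) (predC1 n)) // => -> /=. lia. }
case: (boolP (has (fun v => v \notin s') c)) => [/hasP [v hv hnv] | /hasPn H].
2:{ have : {subset c <= s'} by move=> u /H; rewrite negbK.
    move/(uniq_leq_size c_uniq). rewrite Sz c_size. lia. }
exists v => //.
have Sub2 : {subset s' <= filter (predC1 v) c}.
{ move=> u hu. rewrite mem_filter (Sub _ hu) andbT /=. apply/eqP => E. by rewrite -E hu in hnv. }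
have [_ Eq] := uniq_min_size Us' Sub2 (ltac:(by rewrite size_filter_pred1 // Sz)).
apply: (irr_sorted_eq ltn_trans ltnn Ss (sv_sorted v)) => u.
case: (eqVneq u n) => [->|hun]; first by rewrite Hn sv_mem eqxx.
rewrite sv_mem (negPf hun) /=. have := Eq u. rewrite !mem_filter /= hun /=. by move=> ->.
Qed.

Lemma count_step (P : pred (seq nat)) : 0 < k ->
  count P (kcliques k g') <= count P (kcliques k g) + count (fun v => P (sv v)) c.
Proof.
move=> hk. rewrite (count_split P (fun s => n \in s)) addnC.
apply: leq_add.
- rewrite -!size_filter. apply: uniq_leq_size.
  + apply: filter_uniq. exact: kcliques_uniq.
  + move=> s; rewrite mem_filter => /andP [/andP [hP hn] hs].
    by rewrite mem_filter hP (kc_back _ hs hn).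
- rewrite -!size_filter -(size_map sv [seq v <- c | P (sv v)]). apply: uniq_leq_size.
  + apply: filter_uniq. exact: kcliques_uniq.
  + move=> s; rewrite mem_filter => /andP [/andP [hP hn] hs].
    have [v hv Es] := kc_newform _ hk hs hn. rewrite Es in hP *.
    apply: map_f. by rewrite mem_filter hP hv.
Qed.

Lemma size_step : 0 < k -> size (kcliques k g) + k <= size (kcliques k g').
Proof.
move=> hk. rewrite -{2}c_size -(size_map sv) -size_cat. apply: uniq_leq_size.
- rewrite cat_uniq kcliques_uniq /=. apply/andP; split.
  + apply/hasPn => s /mapP [v hv ->]. apply/negP; rewrite kcliquesP => /and3P [H1 _ _].
    have Hn : n \in sv v by rewrite sv_mem eqxx.
    have := mem_subseq H1 Hn. by rewrite mem_iota /= add0n ltnn.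
  + rewrite map_inj_in_uniq; first exact: c_uniq.
    move=> v w hv hw E.
    apply/eqP; apply/negP => /negP hvw.
    have : v \in sv w by rewrite sv_mem hvw hv orbT.
    rewrite -E sv_mem eqxx /= orbF. by rewrite ltn_eqF // (allP c_lt).
- move=> s; rewrite mem_cat => /orP [hs | /mapP [v hv ->]].
  + exact: kc_old.
  + exact: kc_new.
Qed.

End Step.

Definition Xc k g (x : nat) := count (fun s => x \in s) (kcliques k g).
Definition Inv0 k (g : graph) t := [/\ g.1 = k + t, rng g & 1 + k * t <= size (kcliques k g)].
Definition Inv1 k (x : nat) (g : graph) :=
  [/\ x < g.1, k <= degree g x & Xc k g x + (k-1)*k <= k + (k-1) * degree g x].

Lemma size_gt0_mem {T : eqType} (x : T) s : x \in s -> 0 < size s.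
Proof. by case: s. Qed.

Lemma Inv0_G0 k : 0 < k -> Inv0 k (G0 k) 0.
Proof.
move=> hk. split.
- by rewrite addn0.
- apply/allP => e /allpairsPdep [u [v [hu hv ->]]] /=.
  move: hu hv; rewrite !mem_iota add0n => /andP [_ hu] /andP [h1 h2].
  rewrite hu /=. move: h2. by rewrite subnKC.
- rewrite muln0 addn0. apply: (@size_gt0_mem _ (iota 0 k)).
  rewrite kcliquesP subseq_refl size_iota eqxx /=.
  have Hs : pairwise ltn (iota 0 k) by rewrite -(sorted_pairwise ltn_trans) iota_ltn_sorted.
  have Ha : all (fun u => u < k) (iota 0 k) by apply/allP => u; rewrite mem_iota.
  apply: (sub_in_pairwise _ Ha Hs) => u v hu hv huv.
  rewrite /adj /=. apply/orP; left. apply/allpairsPdep. exists u, v. split=> //.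
  + by rewrite mem_iota.
  + have hu' : u < k by [].
    have hv' : v < k by [].
    rewrite mem_iota subnKC //. by apply/andP; split.
Qed.

Lemma Inv0_step k g t c : 0 < k -> Inv0 k g t -> c \in kcliques k g -> Inv0 k (step g c) t.+1.
Proof.
move=> hk [H1 H2 H3] Hc. split.
- by rewrite /= H1 addnS.
- exact: (rng_step _ _ _ H2 Hc).
- have := size_step _ _ _ H2 Hc hk. rewrite mulnS. lia.
Qed.

Lemma count_sv_old k g c x : rng g -> c \in kcliques k g -> x < g.1 ->
  count (fun v => x \in sv g c v) c <= (k-1) * (x \in c).
Proof.
move=> Hr Hc hx.
rewrite (@eq_count _ _ (fun v => (x != v) && (x \in c))); last first.
{ move=> v. by rewrite sv_mem (ltn_eqF hx). }
case: (boolP (x \in c)) => hxc.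
- rewrite muln1 (@eq_count _ _ (predC1 x)); last by move=> v /=; rewrite andbT eq_sym.
  rewrite -size_filter (size_filter_pred1 _ _ _ Hr Hc _ hxc). lia.
- rewrite muln0 (@eq_count _ _ pred0) ?count_pred0 //. move=> v /=. by rewrite andbF.
Qed.

Lemma Inv1_step k x g t c : 1 < k -> Inv0 k g t -> Inv1 k x g -> c \in kcliques k g ->
  Inv1 k x (step g c).
Proof.
move=> hk [_ Hr _] [hx hd hX] Hc.
have Hd := deg_step _ _ Hr _ hx.
have HX := count_step _ _ _ Hr Hc (fun s => x \in s) (ltnW hk).
have HS := count_sv_old _ _ _ _ Hr Hc hx.
rewrite /Inv1 /= Hd. split.
- exact: ltn_trans hx (ltnSn _).
- exact: leq_trans hd (leq_addr _ _).
- change (is_true (Xc k (step g c) x <= Xc k g x + count (fun v : nat => x \in sv g c v) c)) in HX.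
  rewrite mulnDr. lia.
Qed.

Lemma Xc_new0 k g : rng g -> Xc k g g.1 = 0.
Proof.
move=> Hr. rewrite /Xc. apply/eqP; rewrite -leqn0 leqNgt -has_count.
apply/hasPn => s. rewrite kcliquesP => /and3P [H1 _ _].
apply/negP => /(mem_subseq H1). by rewrite mem_iota add0n ltnn andbF.
Qed.

Lemma Inv1_birth k g t c : 1 < k -> Inv0 k g t -> c \in kcliques k g ->
  Inv1 k g.1 (step g c) /\ degree (step g c) g.1 = k.
Proof.
move=> hk [_ Hr _] Hc.
have Hd : degree (step g c) g.1 = k by rewrite (deg_new _ _ _ Hr Hc) (c_size _ _ _ Hc).
have HX := count_step _ _ _ Hr Hc (fun s => g.1 \in s) (ltnW hk).
have HS : count (fun v => g.1 \in sv g c v) c <= k.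
{ rewrite -(c_size _ _ _ Hc). exact: count_size. }
have H0 := Xc_new0 k _ Hr.
change (is_true (Xc k (step g c) g.1 <= Xc k g g.1 + count (fun v : nat => g.1 \in sv g c v) c)) in HX.
split=> //. rewrite /Inv1 Hd. split=> //. lia.
Qed.

Open Scope R_scope.

Module Ana.
Import Coquelicot.Coquelicot.

Lemma psi_der (c : R) :
  derivable_pt_lim (fun z => (1 + z) * exp (- (2 * z)) - (1 - z)) c
    (1 - (1 + 2 * c) * exp (- (2 * c))).
Proof.
apply is_derive_Reals.
auto_derive; auto.
ring.
Qed.

Lemma L1 (z : R) : 0 <= z -> (1 - z) * exp (2 * z) <= 1 + z.
Proof.
intro hz.
destruct (Rle_lt_or_eq_dec 0 z hz) as [hz'|<-].
2:{ rewrite Rmult_0_r exp_0. lra. }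
destruct (MVT_cor2 _ _ 0 z hz' (fun c _ => psi_der c)) as [c [hc1 hc2]].
assert (H1 : 0 <= 1 - (1 + 2 * c) * exp (- (2 * c))).
{ rewrite exp_Ropp. pose proof (exp_ineq1_le (2 * c)). pose proof (exp_pos (2*c)).
  assert ((1 + 2 * c) / exp (2 * c) <= 1) by (apply Rcomplements.Rle_div_l; lra).
  unfold Rdiv in *. lra. }
assert (H2 : 0 <= (1 + z) * exp (- (2 * z)) - (1 - z)).
{ replace ((1 + z) * exp (- (2 * z)) - (1 - z)) with
   ((1 + z) * exp (- (2 * z)) - (1 - z) - ((1 + 0) * exp (- (2 * 0)) - (1 - 0))).
  2:{ rewrite Rmult_0_r Ropp_0 exp_0. ring. }
  rewrite hc1. apply Rmult_le_pos; lra. }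
pose proof (exp_pos (2*z)).
rewrite exp_Ropp in H2.
assert (H3: (1 - z) <= (1+z) * / exp (2*z)) by lra.
apply (Rmult_le_compat_r (exp (2*z))) in H3; [|lra].
rewrite Rmult_assoc Rinv_l in H3; lra.
Qed.

End Ana.

Lemma INR_muln (a b : nat) : INR (muln a b) = INR a * INR b.
Proof. by rewrite -multE mult_INR. Qed.
Lemma INR_addn (a b : nat) : INR (addn a b) = INR a + INR b.
Proof. by rewrite -plusE plus_INR. Qed.

Lemma exp_pow_nat (x : R) (n : nat) : exp x ^ n = exp (INR n * x).
Proof.
induction n as [|n IH]. simpl. rewrite Rmult_0_l exp_0; ring.
change (exp x ^ n.+1) with (exp x * exp x ^ n).
rewrite IH -exp_plus S_INR. f_equal. ring.
Qed.

Lemma L2 (q : nat) : (1 <= q)%nat ->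
  exp 2 * INR q ^ (2*q+1) <= INR q.+1 ^ (2*q+1).
Proof.
move=> hq.
set Q := INR q.
have HQ : 1 <= Q by rewrite /Q; apply (le_INR 1); apply/leP.
set z := / (2 * Q + 1).
have hz : 0 <= z by unfold z; apply Rlt_le; apply Rinv_0_lt_compat; lra.
have hz1 : z * (2 * Q + 1) = 1 by unfold z; field; lra.
pose proof (Ana.L1 z hz) as H.
have H2 : Q * exp (2 * z) <= Q + 1.
{ have E1 : 1 - z = 2 * Q * z by nra.
  have E2 : 1 + z = (2 * Q + 2) * z by nra.
  rewrite E1 E2 in H.
  have zpos : 0 < z by unfold z; apply Rinv_0_lt_compat; lra.
  apply (Rmult_le_reg_l (2 * z)); [lra|]. nra. }
have H0 : 0 <= Q * exp (2 * z) by apply Rmult_le_pos; [lra| apply Rlt_le, exp_pos].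
have H3 := pow_incr (Q * exp (2 * z)) (Q+1) (2*q+1) (conj H0 H2).
rewrite Rpow_mult_distr exp_pow_nat in H3.
have E : INR (2 * q + 1) * (2 * z) = 2.
{ rewrite plus_INR mult_INR. simpl (INR 2). simpl (INR 1). fold Q. nra. }
rewrite E in H3. rewrite S_INR. fold Q. lra.
Qed.

Lemma L3 (n : nat) :
  INR (n.+1)`! ^ 2 * exp (2 * INR n.+1) <= exp 2 * INR n.+1 ^ (2*n.+1+1).
Proof.
elim: n => [|n IH].
{ rewrite /= Rmult_1_r !Rmult_1_l Rmult_1_r. lra. }
rewrite factS INR_muln.
have E1 : exp (2 * INR n.+2) = exp (2 * INR n.+1) * exp 2.
{ rewrite -exp_plus. f_equal. rewrite (S_INR n.+1). ring. }
rewrite E1.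
have L := L2 n.+1 (isT : (1 <= n.+1)%nat).
have P1 : 0 <= INR n.+2 ^ 2 by apply pow2_ge_0.
have P2 : 0 < exp 2 by apply exp_pos.
have E2 : (2 * n.+2 + 1 = 2 + (2 * n.+1 + 1))%nat by lia.
rewrite E2 pow_add.
have E3 : (INR n.+2 * INR (n.+1)`!) ^ 2 * (exp (2 * INR n.+1) * exp 2)
   = INR n.+2 ^ 2 * exp 2 * (INR (n.+1)`! ^ 2 * exp (2 * INR n.+1)) by ring.
rewrite E3.
apply Rle_trans with (INR n.+2 ^ 2 * exp 2 * (exp 2 * INR n.+1 ^ (2 * n.+1 + 1))).
{ apply Rmult_le_compat_l; [apply Rmult_le_pos; lra|exact IH]. }
have E4 : INR n.+2 ^ 2 * exp 2 * (exp 2 * INR n.+1 ^ (2 * n.+1 + 1))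
  = INR n.+2 ^ 2 * exp 2 * (exp 2 * INR n.+1 ^ (2 * n.+1 + 1)) by ring.
apply Rle_trans with (INR n.+2 ^ 2 * exp 2 * INR n.+2 ^ (2 * n.+1 + 1)).
{ apply Rmult_le_compat_l; [apply Rmult_le_pos; lra|exact L]. }
right. ring.
Qed.

Lemma stirling (q : nat) : (1 <= q)%nat ->
  INR q`! <= exp 1 * sqrt (INR q) * INR q ^ q * exp (- INR q).
Proof.
case: q => [//|n] _.
have H := L3 n.
set Q := INR n.+1 in H *.
have HQ : 0 < Q by rewrite /Q; apply lt_0_INR; lia.
apply Rsqr_incr_0_var.
2:{ apply Rmult_le_pos; [|apply Rlt_le, exp_pos].
    apply Rmult_le_pos; [|apply pow_le; lra].
    apply Rmult_le_pos; [apply Rlt_le, exp_pos|apply sqrt_pos]. }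
rewrite /Rsqr.
have S : sqrt Q * sqrt Q = Q by apply sqrt_sqrt; lra.
have EE : exp 1 * exp 1 = exp 2 by rewrite -exp_plus; f_equal; ring.
have EQ : exp (- Q) * exp (- Q) * exp (2 * Q) = 1.
{ rewrite -!exp_plus -exp_0. f_equal. ring. }
have Ep : (2 * n.+1 + 1 = n.+1 + n.+1 + 1)%nat by lia.
rewrite Ep !pow_add pow_1 in H.
have P : 0 < exp (2 * Q) by apply exp_pos.
apply (Rmult_le_reg_r (exp (2 * Q))); [exact P|].
apply Rle_trans with (exp 2 * (Q ^ n.+1 * Q ^ n.+1 * Q)).
{ have E : INR (n.+1)`! * INR (n.+1)`! = INR (n.+1)`! ^ 2 by ring.
  rewrite E. exact H. }
right.
transitivity ((exp 1 * exp 1) * (sqrt Q * sqrt Q) * (Q ^ n.+1 * Q ^ n.+1) * (exp (- Q) * exp (- Q) * exp (2 * Q))).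
{ rewrite EE S EQ. ring. }
ring.
Qed.

Lemma INR_expn (a b : nat) : INR (expn a b) = INR a ^ b.
Proof. elim: b => [|b IH]; first by rewrite expn0. by rewrite expnS INR_muln IH. Qed.

Lemma fact_grow (k q i : nat) : (1 <= q)%nat -> (i <= k)%nat ->
  ((q + i)`! <= q`! * expn ((k+1)*q) i)%nat.
Proof.
move=> hq; elim: i => [|i IH] hi.
{ by rewrite addn0 expn0 muln1. }
rewrite addnS factS expnS.
have H1 : ((q + i).+1 <= (k+1) * q)%nat by nia.
have H2 := IH (ltnW hi).
rewrite mulnCA.
apply: leq_mul => //.
Qed.

Lemma final_bound (k q m : nat) : (2 <= k)%nat -> (1 <= q)%nat -> (q <= m)%nat -> (m < q + k)%nat ->
  INR (m.+1)`! / INR q ^ m <= exp 1 * INR (k+1) ^ k * INR q * sqrt (INR q) * exp (- INR q).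
Proof.
move=> hk hq hqm hmk.
set r := (m - q)%nat.
have Em : m = (q + r)%nat by rewrite /r; lia.
have Hf := fact_grow k q (r.+1) hq (ltac:(rewrite /r; lia)).
rewrite addnS -Em in Hf.
have Hf' := le_INR _ _ (elimT leP Hf).
rewrite INR_muln INR_expn INR_muln INR_addn in Hf'.
set Q := INR q in Hf' *.
set K := INR k in Hf' *.
have HQ : 1 <= Q by rewrite /Q; apply (le_INR 1); apply/leP.
have HK : 0 <= K by apply pos_INR.
have St := stirling q hq. fold Q in St.
have Qm : 0 < Q ^ m by apply pow_lt; lra.
apply (Rcomplements.Rle_div_l); [exact Qm|].
apply Rle_trans with (1 := Hf').
have Hk1 : (K + 1) ^ r.+1 <= (K + 1) ^ k.
{ apply Rle_pow; [simpl; lra|]. apply/leP. rewrite /r. lia. }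
rewrite plus_INR. fold K. simpl (INR 1).
have E : ((K + 1) * Q) ^ r.+1 = (K+1)^r.+1 * Q * Q ^ r.
{ rewrite Rpow_mult_distr. simpl. ring. }
rewrite E Em pow_add.
have P1 : 0 <= Q ^ r by apply pow_le; lra.
have P2 : 0 <= INR q`! by apply pos_INR.
have P3 : 0 <= (K+1) ^ r.+1 by apply pow_le; lra.
have P4 : 0 <= exp 1 * sqrt Q * Q ^ q * exp (- Q).
{ apply Rmult_le_pos; [|apply Rlt_le, exp_pos].
  apply Rmult_le_pos; [|apply pow_le; lra].
  apply Rmult_le_pos; [apply Rlt_le, exp_pos|apply sqrt_pos]. }
apply Rle_trans with ((exp 1 * sqrt Q * Q ^ q * exp (- Q)) * ((K + 1) ^ k * Q * Q ^ r)).
{ apply Rmult_le_compat; try assumption.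
  { apply Rmult_le_pos; [|exact P1]. apply Rmult_le_pos; lra. }
  apply Rmult_le_compat_r; [exact P1|]. apply Rmult_le_compat_r; lra. }
right. ring.
Qed.

Fixpoint EX (k m : nat) (g : graph) (f : graph -> R) : R :=
  match m with
  | 0 => f g
  | S m' => sumR [seq EX k m' (step g c) f | c <- kcliques k g] / INR (size (kcliques k g))
  end.

Lemma sumR_le {T : eqType} (s : seq T) (f1 f2 : T -> R) :
  (forall x, x \in s -> f1 x <= f2 x) -> sumR [seq f1 x | x <- s] <= sumR [seq f2 x | x <- s].
Proof.
elim: s => [|x s IH] H /=; first lra.
apply: Rplus_le_compat; first by apply: H; rewrite inE eqxx.
apply: IH => y hy. apply: H. by rewrite inE hy orbT.
Qed.

Lemma sumR_scal {T : Type} (s : seq T) (a : R) (f : T -> R) :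
  sumR [seq a * f x | x <- s] = a * sumR [seq f x | x <- s].
Proof. elim: s => [|x s IH] /=; [ring| rewrite IH; ring]. Qed.

Lemma sumR_zero {T : Type} (s : seq T) : sumR [seq 0 | _ <- s] = 0.
Proof. elim: s => [|x s IH] /=; [ring| rewrite IH; ring]. Qed.

Lemma sumR_ones {T : Type} (s : seq T) : sumR [seq 1 | _ <- s] = INR (size s).
Proof. elim: s => [|x s IH] //. rewrite [LHS]/= IH.
have -> : size (x :: s) = (size s).+1 by []. rewrite S_INR. ring. Qed.

Lemma sumR_bool {T : Type} (s : seq T) (P : pred T) (f : bool -> R) :
  sumR [seq f (P x) | x <- s] = INR (count P s) * f true + INR (count (predC P) s) * f false.
Proof.
elim: s => [|x s IH]; first by rewrite /=; ring.
rewrite [LHS]/= IH.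
rewrite (_ : count P (x :: s) = (P x + count P s)%nat) //.
rewrite (_ : count (predC P) (x :: s) = (~~ P x + count (predC P) s)%nat) //.
rewrite -!plusE !plus_INR. case: (P x).
- change (INR (nat_of_bool true)) with 1. change (INR (nat_of_bool (~~ true))) with 0. ring.
- change (INR (nat_of_bool false)) with 0. change (INR (nat_of_bool (~~ false))) with 1. ring.
Qed.

Lemma inv_INR_nonneg n : 0 <= / INR n.
Proof.
case: n => [|n]; first by rewrite Rinv_0; lra.
apply: Rlt_le. apply: Rinv_0_lt_compat. apply: lt_0_INR. lia.
Qed.

Lemma prT_cmp k (Q : seq graph -> Prop) E1 E2 (c : R) r d h :
  0 <= c ->
  (forall h c0, Q h -> c0 \in kcliques k (last (G0 k) h) -> Q (rcons h (step (last (G0 k) h) c0))) ->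
  (forall h', Q h' -> size h' = (size h + d)%nat -> prT k r h' E1 <= c * prT k r h' E2) ->
  Q h -> prT k (d + r) h E1 <= c * prT k (d + r) h E2.
Proof.
move=> hc HQ Hl. elim: d h Hl => [|d IH] h Hl Hh.
- rewrite add0n. apply: Hl => //. by rewrite addn0.
- rewrite addSn /=.
  rewrite /Rdiv -Rmult_assoc -sumR_scal. apply: Rmult_le_compat_r; first exact: inv_INR_nonneg.
  apply: sumR_le => c0 hc0. apply: IH; last by apply: HQ.
  move=> h' Hq Hs. apply: Hl => //. by rewrite Hs size_rcons addSnnS.
Qed.

Lemma prT_ext k E1 E2 r h :
  (forall t, size t = r -> E1 (h ++ t) = E2 (h ++ t)) -> prT k r h E1 = prT k r h E2.
Proof.
elim: r h => [|r IH] h H /=.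
- by have := H [::] erefl; rewrite cats0 => ->.
- congr (_ / _). congr sumR. apply: eq_map => c0. apply: IH => t Ht. rewrite cat_rcons. apply: H.
  by rewrite /= Ht.
Qed.

Lemma prT_last k (f : graph -> bool) r h :
  prT k r h (fun h => f (last (G0 k) h)) = EX k r (last (G0 k) h) (fun g => if f g then 1 else 0).
Proof.
elim: r h => [|r IH] h //=. congr (_ / _). congr sumR. apply: eq_map => c0. by rewrite IH last_rcons.
Qed.

Lemma EX_mono_inv k (P : graph -> Prop) (f1 f2 : graph -> R) :
  (forall g c, P g -> c \in kcliques k g -> P (step g c)) ->
  (forall g, P g -> f1 g <= f2 g) -> forall r g, P g -> EX k r g f1 <= EX k r g f2.
Proof.
move=> HP Hf. elim=> [|r IH] g Hg /=; first exact: Hf.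
apply: Rmult_le_compat_r; first exact: inv_INR_nonneg.
apply: sumR_le => c hc. apply: IH. exact: HP.
Qed.

Lemma EX_scal k a f r g : EX k r g (fun g => a * f g) = a * EX k r g f.
Proof.
elim: r g => [|r IH] g //=.
rewrite (eq_map (fun c => IH (step g c))) sumR_scal /Rdiv. ring.
Qed.

Lemma EX_zero k r g : EX k r g (fun _ => 0) = 0.
Proof.
elim: r g => [|r IH] g //=.
rewrite (eq_map (fun c => IH (step g c))) sumR_zero /Rdiv. ring.
Qed.

Lemma EX_one k (P : graph -> Prop) :
  (forall g c, P g -> c \in kcliques k g -> P (step g c)) ->
  (forall g, P g -> (0 < size (kcliques k g))%nat) ->
  forall r g, P g -> EX k r g (fun _ => 1) = 1.
Proof.
move=> HP Hs. elim=> [|r IH] g Hg //=.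
have E : {in kcliques k g, (fun c => EX k r (step g c) (fun=> 1)) =1 (fun _ => 1)}.
{ move=> c hc. exact: IH (HP g c Hg hc). }
rewrite (proj1 (eq_in_map _ _ _) E) sumR_ones.
apply: Rinv_r. apply: not_0_INR. have := Hs g Hg. move=> H; apply/eqP; by rewrite -lt0n.
Qed.

Fixpoint rf (a : R) (m : nat) : R :=
  match m with 0 => 1 | S m' => rf a m' * (a + INR m') end.

Lemma rf_S a m : rf a m.+1 = rf a m * (a + INR m).
Proof. by []. Qed.

Lemma rf_shift a m : rf (a + 1) m * a = rf a m * (a + INR m).
Proof.
elim: m => [|m IH]; first by rewrite /=; ring.
rewrite !rf_S S_INR.
transitivity ((rf (a + 1) m * a) * (a + 1 + INR m)); first ring.
rewrite IH. ring.
Qed.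

Lemma rf_nonneg a m : 0 <= a -> 0 <= rf a m.
Proof.
move=> ha. elim: m => [|m IH]; first by rewrite /=; lra.
rewrite rf_S. apply: Rmult_le_pos => //. have := pos_INR m. lra.
Qed.

Lemma rf_mono a b m : 0 <= a -> a <= b -> rf a m <= rf b m.
Proof.
move=> ha hab. elim: m => [|m IH]; first by rewrite /=; lra.
rewrite !rf_S. have := pos_INR m => hm.
apply: Rmult_le_compat => //; [exact: rf_nonneg | lra | lra].
Qed.

Lemma rf_pow a m : 0 <= a -> a ^ m <= rf a m.
Proof.
move=> ha. elim: m => [|m IH]; first by rewrite /=; lra.
rewrite rf_S. change (a ^ m.+1) with (a * a ^ m). rewrite Rmult_comm.
have := pos_INR m => hm.
apply: Rmult_le_compat => //; [exact: pow_le | lra].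
Qed.

Lemma rf_two m : rf 2 m = INR (m.+1)`!.
Proof.
elim: m => [|m IH]; first by rewrite /=; ring.
rewrite rf_S IH (factS m.+1) INR_muln !S_INR. ring.
Qed.

Definition pot k x g := INR (degree g x) - INR k + INR k / INR (k - 1).
Definition Wt k m t := 1 + INR m * INR (k - 1) / INR (1 + k * t).
Fixpoint PW k m t r := match r with 0 => 1 | S r' => Wt k m t * PW k m t.+1 r' end.

Lemma PW_nonneg k m t r : 0 <= PW k m t r.
Proof.
elim: r t => [|r IH] t /=; first lra.
apply: Rmult_le_pos => //. rewrite /Wt.
have := pos_INR m. have := pos_INR (k - 1). have := pos_INR (1 + k * t) => h1 h2 h3.
have : 0 <= INR m * INR (k - 1) / INR (1 + k * t).
{ apply: Rmult_le_pos; [exact: Rmult_le_pos | exact: inv_INR_nonneg]. }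
lra.
Qed.

Lemma key_ineq X Y a R0 R1 K M T0 :
  0 <= X -> 0 <= Y -> 0 < T0 -> T0 <= X + Y -> X <= K * a -> 0 <= K -> 0 < a ->
  R1 * a = R0 * (a + M) -> 0 <= R0 -> R0 <= R1 -> 0 <= M ->
  (X * R1 + Y * R0) / (X + Y) <= R0 * (1 + M * K / T0).
Proof.
move=> hX hY hT hTXY hXK hK ha hR hR0 hR01 hM.
have h1 : X * (R1 - R0) <= K * a * (R1 - R0) by apply: Rmult_le_compat_r; lra.
have h2 : a * (R1 - R0) = R0 * M by nra.
have h3 : 1 <= (X + Y) / T0 by apply Rcomplements.Rle_div_r; lra.
have h4 : 0 <= R0 * M * K by apply: Rmult_le_pos => //; apply: Rmult_le_pos.
apply Rcomplements.Rle_div_l; first lra.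
have E : R0 * (1 + M * K / T0) * (X + Y) = R0 * (X + Y) + R0 * M * K * ((X + Y) / T0)
  by field; lra.
rewrite E.
have h5 : R0 * M * K <= R0 * M * K * ((X + Y) / T0) by nra.
nra.
Qed.

Lemma INR_b (b : bool) : INR (nat_of_bool b) = if b then 1 else 0.
Proof. by case: b. Qed.

Lemma pot_step k x g c : rng g -> (x < g.1)%nat ->
  pot k x (step g c) = pot k x g + (if x \in c then 1 else 0).
Proof.
move=> Hr hx. rewrite /pot (deg_step _ _ Hr _ hx) INR_addn INR_b. ring.
Qed.

Lemma pot_pos k x g : (1 < k)%nat -> (k <= degree g x)%nat -> 0 < pot k x g.
Proof.
move=> hk hd. rewrite /pot.
have h1 : INR k <= INR (degree g x) by apply: le_INR; apply/leP.
have h2 : 0 < INR (k - 1) by apply: lt_0_INR; apply/ltP; lia.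
have h3 : 0 < INR k / INR (k - 1) by apply: Rdiv_lt_0_compat => //; apply: lt_0_INR; apply/ltP; lia.
lra.
Qed.

Lemma Xc_pot k x g : (1 < k)%nat -> Inv1 k x g -> INR (Xc k g x) <= INR (k - 1) * pot k x g.
Proof.
move=> hk [_ hd hX].
have := le_INR _ _ (elimT leP hX). rewrite !INR_addn !INR_muln.
have h2 : 0 < INR (k - 1) by apply: lt_0_INR; apply/ltP; lia.
rewrite /pot.
have E : INR (k - 1) * (INR (degree g x) - INR k + INR k / INR (k - 1))
  = INR (k - 1) * INR (degree g x) - INR (k - 1) * INR k + INR k by field; lra.
rewrite E. lra.
Qed.

Lemma super k x m : (1 < k)%nat -> forall r g t, Inv0 k g t -> Inv1 k x g ->
  EX k r g (fun g => rf (pot k x g) m) <= rf (pot k x g) m * PW k m t r.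
Proof.
move=> hk. elim=> [|r IH] g t H0 H1.
{ rewrite /=. lra. }
have [Hg1 Hr Hsz] := H0.
have [hx hd _] := H1.
set a := pot k x g.
have ha : 0 < a by apply: pot_pos.
rewrite [EX _ _ _ _]/= [PW _ _ _ _]/=.
apply: Rle_trans.
{ apply: Rmult_le_compat_r; first exact: inv_INR_nonneg.
  apply: (@sumR_le _ (kcliques k g) _ (fun c => PW k m t.+1 r * rf (a + (if x \in c then 1 else 0)) m)) => c hc.
  rewrite -pot_step //. rewrite Rmult_comm. apply: IH.
  - exact: (Inv0_step _ _ _ _ (ltnW hk) H0 hc).
  - exact: (Inv1_step _ _ _ _ _ hk H0 H1 hc). }
rewrite sumR_scal.
rewrite (sumR_bool _ (fun c => x \in c) (fun b => rf (a + (if b then 1 else 0)) m)).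
rewrite Rplus_0_r.
set X := INR (count _ _). set Y := INR (count _ _).
have EXY : X + Y = INR (size (kcliques k g)) by rewrite /X /Y -plus_INR plusE count_predC.
rewrite -EXY.
have hXK : X <= INR (k - 1) * a.
{ have := Xc_pot _ _ _ hk H1. by rewrite /Xc. }
have hT0 : 0 < INR (1 + k * t) by apply: lt_0_INR; apply/ltP; lia.
have hT : INR (1 + k * t) <= X + Y by rewrite EXY; apply: le_INR; apply/leP.
have key := key_ineq X Y a (rf a m) (rf (a + 1) m) (INR (k - 1)) (INR m) (INR (1 + k * t)) (pos_INR _) (pos_INR _) hT0 hT hXK (pos_INR _) ha
   (rf_shift a m) (rf_nonneg a m (Rlt_le _ _ ha)) (rf_mono a (a + 1) m (Rlt_le _ _ ha) (ltac:(lra))) (pos_INR m).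
rewrite /Wt.
have HP : 0 <= PW k m t.+1 r.
{ exact: PW_nonneg. }
rewrite /Rdiv Rmult_assoc -/(Rdiv _ (X + Y)).
apply: Rle_trans; first by apply: Rmult_le_compat_l; [exact HP| exact key].
rewrite /Rdiv. right. ring.
Qed.

Lemma rf_pos a m : 0 < a -> 0 < rf a m.
Proof.
move=> ha. elim: m => [|m IH]; first by rewrite /=; lra.
rewrite rf_S. apply: Rmult_lt_0_compat => //. have := pos_INR m. lra.
Qed.

Lemma Wt_eq k p t : (0 < k)%nat ->
  Wt k (k * p) t = (INR t + / INR k + INR (p * (k - 1))) / (INR t + / INR k).
Proof.
move=> hk. have hK : 0 < INR k by apply: lt_0_INR; apply/ltP.
have ht := pos_INR t.
rewrite /Wt !INR_muln INR_addn INR_muln. simpl (INR 1).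
field. split; first lra.
have : 0 < INR t + / INR k by have := Rinv_0_lt_compat _ hK; lra.
have := Rmult_le_pos _ _ (Rlt_le _ _ hK) ht. lra.
Qed.

Lemma PW_tel k p t r : (0 < k)%nat ->
  PW k (k * p) t r * rf (INR t + / INR k) (p * (k - 1))
  = rf (INR (t + r) + / INR k) (p * (k - 1)).
Proof.
move=> hk. have hK : 0 < INR k by apply: lt_0_INR; apply/ltP.
elim: r t => [|r IH] t.
{ rewrite addn0 /=. ring. }
rewrite [PW _ _ _ _]/= Rmult_assoc.
set a := INR t + / INR k.
have ha : 0 < a by rewrite /a; have := pos_INR t; have := Rinv_0_lt_compat _ hK; lra.
have E : Wt k (k * p) t * rf a (p * (k - 1)) = rf (a + 1) (p * (k - 1)).
{ rewrite Wt_eq // -/a.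
  have := rf_shift a (p * (k - 1)) => Hs.
  apply: (Rmult_eq_reg_r a); last lra.
  rewrite Hs /Rdiv. field. lra. }
rewrite (Rmult_comm (PW _ _ _ _)) -Rmult_assoc E Rmult_comm.
have Ea : a + 1 = INR t.+1 + / INR k by rewrite /a S_INR; ring.
rewrite Ea IH addSnnS. done.
Qed.

Lemma rf_ratio N J e m : 0 < J -> J <= N -> 0 <= e ->
  rf (N + e) m <= (N / J) ^ m * rf (J + e) m.
Proof.
move=> hJ hJN he. elim: m => [|m IH]; first by rewrite /=; lra.
rewrite !rf_S. change ((N / J) ^ m.+1) with (N / J * (N / J) ^ m).
have hm := pos_INR m.
have h1 : N + e + INR m <= N / J * (J + e + INR m).
{ have E : N / J * (J + e + INR m) = N + N / J * (e + INR m) by field; lra.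
  rewrite E. have : 1 <= N / J by apply Rcomplements.Rle_div_r; lra.
  nra. }
have h2 : 0 <= rf (N + e) m by apply: rf_nonneg; lra.
apply: Rle_trans; first apply: Rmult_le_compat; [exact h2| lra| exact IH| exact h1|].
right. ring.
Qed.

Lemma PW_bound k p j r : (0 < k)%nat -> (1 <= j)%nat ->
  PW k (k * p) j r <= (INR (j + r) / INR j) ^ (p * (k - 1)).
Proof.
move=> hk hj.
have hK : 0 < INR k by apply: lt_0_INR; apply/ltP.
have hJ : 0 < INR j by apply: lt_0_INR; apply/ltP; lia.
have he : 0 <= / INR k by apply: Rlt_le; apply: Rinv_0_lt_compat.
have Hpos : 0 < rf (INR j + / INR k) (p * (k - 1)) by apply: rf_pos; lra.
have T := PW_tel k p j r hk.
have R := rf_ratio (INR (j + r)) (INR j) (/ INR k) (p * (k - 1)) hJ (le_INR _ _ (elimT leP (leq_addr r j))) he.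
apply: (Rmult_le_reg_r _ _ _ Hpos). rewrite T. exact R.
Qed.

Lemma Rpower_pow_mul x y N : 0 < x -> Rpower x y ^ N = Rpower x (y * INR N).
Proof.
move=> hx. rewrite -Rpower_pow; last by apply: exp_pos.
by rewrite Rpower_mult.
Qed.

Lemma main_bound k j n q g : (1 < k)%nat -> (1 <= j)%nat -> (j <= n)%nat -> (1 <= q)%nat ->
  Inv0 k g j -> Inv1 k (born k j) g -> degree g (born k j) = k ->
  EX k (n - j) g (fun g => if (Rlt_dec (INR k + INR q * Rpower (INR n / INR j) (INR (k - 1) / INR k))
                                        (INR (degree g (born k j))) : bool) then 1 else 0)
  <= exp 1 * INR (k + 1) ^ k * INR q * sqrt (INR q) * exp (- INR q).
Proof.
move=> hk hj hjn hq H0 H1 Hd.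
set x := born k j.
set s := Rpower (INR n / INR j) (INR (k - 1) / INR k).
set p := ((q + k - 1) %/ k)%nat.
set m := (k * p)%nat.
have Hm1 : (q <= m)%nat.
{ have := divn_eq (q + k - 1) k. have := ltn_pmod (q + k - 1) (ltnW hk). rewrite /m /p mulnC. lia. }
have Hm2 : (m < q + k)%nat.
{ have := divn_eq (q + k - 1) k. rewrite /m /p mulnC. lia. }
have hK : 0 < INR k by apply: lt_0_INR; apply/ltP; lia.
have hJ : 0 < INR j by apply: lt_0_INR; apply/ltP; lia.
have hN : 0 < INR n by apply: lt_0_INR; apply/ltP; lia.
have hQ : 1 <= INR q by apply: (le_INR 1); apply/leP.
have hs : 0 < s by apply: exp_pos.
have hqs : 0 < INR q * s by apply: Rmult_lt_0_compat; lra.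
have hqsm : 0 < (INR q * s) ^ m by apply: pow_lt.
set P := fun g => exists t, Inv0 k g t /\ Inv1 k x g.
have HP : forall g c, P g -> c \in kcliques k g -> P (step g c).
{ move=> g' c [t [A B]] hc. exists t.+1. split.
  - exact: (Inv0_step _ _ _ _ (ltnW hk) A hc).
  - exact: (Inv1_step _ _ _ _ _ hk A B hc). }
apply: Rle_trans.
{ apply: (EX_mono_inv k P _ (fun g => / (INR q * s) ^ m * rf (pot k x g) m) HP); last by exists j.
  move=> g' [t [_ [_ hd _]]].
  have hp := pot_pos _ _ _ hk hd.
  have hrf : 0 <= rf (pot k x g') m by apply: rf_nonneg; lra.
  have hinv : 0 < / (INR q * s) ^ m by apply: Rinv_0_lt_compat.
  case: (Rlt_dec _ _) => [hlt|_] /=; last by apply: Rmult_le_pos; lra.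
  have h1 : INR q * s < pot k x g'.
  { rewrite /pot. have : 0 < INR k / INR (k - 1).
    { apply: Rdiv_lt_0_compat => //. apply: lt_0_INR; apply/ltP; lia. }
    lra. }
  have h2 : (INR q * s) ^ m <= pot k x g' ^ m by apply: pow_incr; lra.
  have h3 := rf_pow _ m (Rlt_le _ _ hp).
  rewrite -(Rinv_l ((INR q * s) ^ m)); last lra.
  apply: Rmult_le_compat_l; lra. }
rewrite EX_scal.
have Hs := super k x m hk (n - j) g j H0 H1.
apply: Rle_trans.
{ apply: Rmult_le_compat_l; first by apply: Rlt_le; apply: Rinv_0_lt_compat.
  exact: Hs. }
have Hd' : degree g x = k := Hd.
have Hpot : pot k x g = INR k / INR (k - 1) by rewrite /pot Hd'; ring.
have hK1 : 0 < INR (k - 1) by apply: lt_0_INR; apply/ltP; lia.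
have Ha2 : INR k / INR (k - 1) <= 2.
{ apply Rcomplements.Rle_div_l => //. rewrite minus_INR; last by apply/leP; lia.
  have : 2 <= INR k by apply: (le_INR 2); apply/leP. simpl (INR 1). lra. }
have Ha0 : 0 <= INR k / INR (k - 1) by apply: Rlt_le; apply: Rdiv_lt_0_compat.
have Hrf : rf (pot k x g) m <= INR (m.+1)`!.
{ rewrite Hpot -rf_two. exact: rf_mono. }
have HPW : PW k m j (n - j) <= (INR n / INR j) ^ (p * (k - 1)).
{ have := PW_bound k p j (n - j) (ltnW hk) hj. by rewrite subnKC. }
have Esm : s ^ m = (INR n / INR j) ^ (p * (k - 1)).
{ rewrite /s Rpower_pow_mul; last by apply: Rdiv_lt_0_compat.
  rewrite -Rpower_pow; last by apply: Rdiv_lt_0_compat.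
  f_equal. rewrite /m !INR_muln minus_INR; last by apply/leP; lia.
  simpl (INR 1). field. lra. }
set T := (INR n / INR j) ^ (p * (k - 1)).
have hT : 0 < T by apply: pow_lt; apply: Rdiv_lt_0_compat.
have hqm : 0 < INR q ^ m by apply: pow_lt; lra.
apply: Rle_trans; last exact: (final_bound k q m hk hq Hm1 Hm2).
rewrite Rpow_mult_distr Esm -/T.
have hPW0 := PW_nonneg k m j (n - j).
have hrf0 : 0 <= rf (pot k x g) m by apply: rf_nonneg; rewrite Hpot.
apply: Rle_trans.
{ apply: Rmult_le_compat_l; first by apply: Rlt_le; apply: Rinv_0_lt_compat; apply: Rmult_lt_0_compat.
  apply: Rmult_le_compat; [exact hrf0 | exact hPW0 | exact Hrf | exact HPW]. }
rewrite -/T. right. field. lra.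
Qed.

Definition Qh k (h : seq graph) :=
  [/\ (0 < size h)%nat, Inv0 k (last (G0 k) h) (size h).-1 &
      ((1 < size h)%nat -> Inv1 k (last (G0 k) h).1.-1 (last (G0 k) h) /\
                          degree (last (G0 k) h) (last (G0 k) h).1.-1 = k)].

Lemma Qh_init k : (1 < k)%nat -> Qh k [:: G0 k].
Proof. move=> hk. split => //. exact: (Inv0_G0 k (ltnW hk)). Qed.

Lemma Qh_step k h c : (1 < k)%nat -> Qh k h -> c \in kcliques k (last (G0 k) h) ->
  Qh k (rcons h (step (last (G0 k) h) c)).
Proof.
move=> hk [hs H0 _] hc. rewrite /Qh size_rcons last_rcons. split => //.
- have := Inv0_step _ _ _ _ (ltnW hk) H0 hc. by rewrite prednK.
- move=> _. have [A B] := Inv1_birth _ _ _ _ hk H0 hc. by split.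
Qed.

Lemma level k j n q (H : graph) h : (1 < k)%nat -> (1 <= j)%nat -> (j <= n)%nat -> (1 <= q)%nat ->
  Qh k h -> size h = (1 + j)%nat ->
  prT k (n - j) h (fun h => sameG (Gat k h j) H &&
        Rlt_dec (INR k + INR q * Rpower (INR n / INR j) (INR (k - 1) / INR k))
                (INR (degree (Gat k h n) (born k j))))
  <= exp 1 * INR (k + 1) ^ k * INR q * sqrt (INR q) * exp (- INR q) *
     prT k (n - j) h (fun h => sameG (Gat k h j) H).
Proof.
move=> hk hj hjn hq [_ H0 Hb] Hs.
set B := fun g => (Rlt_dec (INR k + INR q * Rpower (INR n / INR j) (INR (k - 1) / INR k))
                (INR (degree g (born k j))) : bool).
set A0 := sameG (Gat k h j) H.
have Hnth : forall t, size t = (n - j)%nat -> nth (G0 k) (h ++ t) j = nth (G0 k) h j.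
{ move=> t Ht. rewrite nth_cat Hs. by rewrite ifT //; lia. }
have Hlast : forall t, size t = (n - j)%nat -> nth (G0 k) (h ++ t) n = last (G0 k) (h ++ t).
{ move=> t Ht. rewrite -nth_last size_cat Hs Ht. congr nth. lia. }
have E1 : prT k (n - j) h (fun h => sameG (Gat k h j) H &&
        Rlt_dec (INR k + INR q * Rpower (INR n / INR j) (INR (k - 1) / INR k))
                (INR (degree (Gat k h n) (born k j))))
   = prT k (n - j) h (fun h' => A0 && B (last (G0 k) h')).
{ apply: prT_ext => t Ht. by rewrite /Gat Hnth // Hlast. }
have E2 : prT k (n - j) h (fun h => sameG (Gat k h j) H) = prT k (n - j) h (fun h' => A0).
{ apply: prT_ext => t Ht. by rewrite /Gat Hnth. }
rewrite E1 E2.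
have C0 : 0 <= exp 1 * INR (k + 1) ^ k * INR q * sqrt (INR q) * exp (- INR q).
{ apply: Rmult_le_pos; last by apply: Rlt_le; apply: exp_pos.
  apply: Rmult_le_pos; last by apply: sqrt_pos.
  apply: Rmult_le_pos; last by apply: pos_INR.
  apply: Rmult_le_pos; first by apply: Rlt_le; apply: exp_pos.
  apply: pow_le. apply: pos_INR. }
clear E1 E2. clearbody A0. case: A0.
- have L1 : prT k (n - j) h (fun h' => true && B (last (G0 k) h'))
           = EX k (n - j) (last (G0 k) h) (fun g => if B g then 1 else 0) := prT_last k B (n - j) h.
  have L2 : prT k (n - j) h (fun h' => true)
           = EX k (n - j) (last (G0 k) h) (fun g => 1) := prT_last k (fun _ => true) (n - j) h.
  rewrite L1 L2.
  set g := last (G0 k) h.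
  have Hj : (size h).-1 = j by rewrite Hs.
  rewrite Hj in H0.
  have [A Bd] := Hb (ltac:(rewrite Hs; lia)).
  have [Hg1 _ _] := H0.
  have Hx : born k j = g.1.-1 by rewrite /born Hg1; lia.
  have One : EX k (n - j) g (fun _ => 1) = 1.
  { apply: (EX_one k (fun g => exists t, Inv0 k g t)); last by exists j.
    - move=> g' c [t Ht] hc. exists t.+1. exact: (Inv0_step _ _ _ _ (ltnW hk) Ht hc).
    - move=> g' [t [_ _ Hsz]]. lia. }
  rewrite One Rmult_1_r.
  apply: (main_bound k j n q g hk hj hjn hq H0); by rewrite Hx.
- have Z : forall E : seq graph -> bool, (forall h', E h' = false) -> prT k (n - j) h E = 0.
  { move=> E HE. rewrite (prT_ext k E (fun _ => false) (n - j) h); last by move=> t _; rewrite HE.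
    rewrite (prT_last k (fun _ => false) (n - j) h). exact: EX_zero. }
  rewrite !Z //. lra.
Qed.

Theorem lemma1 (k : nat) (hk : leq 2 k) :
  exists C : R, 0 < C /\
  forall (j n q : nat) (H : graph),
    leq 1 j -> leq j n -> leq 1 q ->
    0 < probK k n (fun h => sameG (Gat k h j) H) ->
    probK k n (fun h => sameG (Gat k h j) H &&
        Rlt_dec (INR k + INR q * Rpower (INR n / INR j) (INR (k - 1) / INR k))
                (INR (degree (Gat k h n) (born k j))))
      / probK k n (fun h => sameG (Gat k h j) H)
    <= C * INR q * sqrt (INR q) * exp (- INR q).
Proof.
exists (exp 1 * INR (k + 1) ^ k). split.
{ apply: Rmult_lt_0_compat; first exact: exp_pos. apply: pow_lt. apply: lt_0_INR. apply/ltP. lia. }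
move=> j n q H hj hjn hq hpos.
have C0 : 0 <= exp 1 * INR (k + 1) ^ k * INR q * sqrt (INR q) * exp (- INR q).
{ apply: Rmult_le_pos; last by apply: Rlt_le; apply: exp_pos.
  apply: Rmult_le_pos; last by apply: sqrt_pos.
  apply: Rmult_le_pos; last by apply: pos_INR.
  apply: Rmult_le_pos; first by apply: Rlt_le; apply: exp_pos.
  apply: pow_le. apply: pos_INR. }
have L := prT_cmp k (Qh k)
  (fun h => sameG (Gat k h j) H &&
        Rlt_dec (INR k + INR q * Rpower (INR n / INR j) (INR (k - 1) / INR k))
                (INR (degree (Gat k h n) (born k j))))
  (fun h => sameG (Gat k h j) H) _ (n - j) j [:: G0 k] C0
  (fun h c Hq hc => Qh_step k h c hk Hq hc)
  (fun h' Hq Hs => level k j n q H h' hk hj hjn hq Hq Hs) (Qh_init k hk).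
rewrite subnKC // in L.
apply Rcomplements.Rle_div_l => //.
Qed.
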